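(* Let $X$ be a unital commutative semiring. The following are equivalent: (1) the relation $\sim$ on $\mathcal{S}(X)$ is a congruence and the quotient semiring $\tilde{\mathcal{S}}(X)=\mathcal{S}(X)/\sim$ is upper-bound; (2) $X$ is idempotent, linearly ordered by its intrinsic order, and for all $a,b,x\in X$ with $a<b$ one has $ax=0$ or $ax<bx$.
   Context: A semiring $(X,+,0,\cdot)$: $(X,+,0)$ commutative monoid, $(X,\cdot)$ semigroup, distributivity, $0$ absorbing. Idempotent: $x+x=x$. Intrinsic order: $a\le b$ iff $a+x=b$ for some $x$; $a<b$ means $a\le b$, $a\ne b$; a semiring is upper-bound if its intrinsic order is antisymmetric. $\mathcal{S}(X)=X\times X$ with $(a',a'')+(b',b'')=(a'+b',a''+b'')$ and $(a',a'')(b',b'')=(a'b'+a''b'',a'b''+a''b')$. The relation $\sim$: $(a',a'')\sim(b',b'')$ iff $(a',a'')=(b',b'')$, or ($a'\ne a''$, $b'\ne b''$ and $a'+b''=a''+b'$). A congruence is an equivalence relation respecting addition and multiplication. *)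

(* Defs.v *)
From mathcomp Require Import all_boot all_order all_algebra.
Set Implicit Arguments. Unset Strict Implicit. Unset Printing Implicit Defensive.
Import GRing.Theory.
Local Open Scope ring_scope.

Section SemiringDefs.
Variable X : comPzSemiRingType.  (* unital commutative semiring (0 = 1 allowed) *)

Definition ile (a b : X) : Prop := exists x : X, a + x = b.
Definition ilt (a b : X) : Prop := ile a b /\ a <> b.

Definition idempotent_sr : Prop := forall x : X, x + x = x.
Definition linearly_ordered_sr : Prop := forall a b : X, ile a b \/ ile b a.

Definition SX := (X * X)%type.
Definition Sadd (a b : SX) : SX := (a.1 + b.1, a.2 + b.2).
Definition Smul (a b : SX) : SX :=
  (a.1 * b.1 + a.2 * b.2, a.1 * b.2 + a.2 * b.1).

Definition Ssim (a b : SX) : Prop :=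
  a = b \/ (a.1 <> a.2 /\ b.1 <> b.2 /\ a.1 + b.2 = a.2 + b.1).

Definition is_congruence (R : SX -> SX -> Prop) : Prop :=
  [/\ (forall a, R a a), (forall a b, R a b -> R b a),
      (forall a b c, R a b -> R b c -> R a c),
      (forall a a' b b', R a a' -> R b b' -> R (Sadd a b) (Sadd a' b')) &
      (forall a a' b b', R a a' -> R b b' -> R (Smul a b) (Smul a' b'))].

(* Intrinsic order of the quotient S(X)/~, on representatives:
   [a] <= [b] iff exists [x], [a] + [x] = [b], i.e. (a + x) ~ b. *)
Definition quot_ile (a b : SX) : Prop := exists x : SX, Ssim (Sadd a x) b.

(* quotient is upper-bound: its intrinsic order is antisymmetric *)
Definition quot_upper_bound : Prop :=
  forall a b : SX, quot_ile a b -> quot_ile b a -> Ssim a b.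
End SemiringDefs.

(* Main.v *)
Require Import Defs.
From mathcomp Require Import all_boot all_order all_algebra.
Import GRing.Theory.
Local Open Scope ring_scope.

Section Dir12.
Variable X : comPzSemiRingType.

Lemma dir12 : is_congruence (@Ssim X) ->
  [/\ idempotent_sr X, linearly_ordered_sr X &
      forall a b x : X, ilt a b -> a * x = 0 \/ ilt (a * x) (b * x)].
Proof.
move=> [Hr Hs Ht Ha Hm].
have Id : forall x : X, x + x = x.
  move=> x; case: (eqVneq (x + x) x) => // ne.
  case: (eqVneq x 0) => [->|nz]; first by rewrite addr0.
  have H1 : Ssim (x, 0) (x + x, x).
    by right; split; [exact/eqP | split; [exact/eqP | rewrite /= add0r]].
  have := Ha _ _ _ _ H1 (Hr (0,x)).
  rewrite /Sadd /Ssim /= !addr0 add0r.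
  case => [e|[] //]. have := congr1 fst e => /= e'.
  by move: ne; rewrite -e' eqxx.
split => //.
- move=> a b. case: (eqVneq (a+b) b) => e1; first by left; exists b.
  case: (eqVneq (a+b) a) => e2; first by right; exists a; rewrite addrC.
  have bnz : b <> 0 by move=> bz; move: e2; rewrite bz addr0 eqxx.
  have H1 : Ssim (a+b, a) (b, 0).
    by right; split; [exact/eqP | split; [exact: bnz | rewrite /= addr0]].
  have := Ha _ _ _ _ H1 (Hr (0,b)).
  rewrite /Sadd /Ssim /= !addr0 add0r.
  case => [e|[] //]. have := congr1 fst e => /= e'.
  by move: e1; rewrite e' eqxx.
- move=> a b x [[w hw] ne].
  case: (eqVneq (a*x) 0) => [z|nz]; first by left.
  right; split; first by exists (w*x); rewrite -mulrDl hw.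
  move=> e.
  have hab : a + b = b by rewrite -hw addrA Id.
  have bnz : b <> 0 by move=> bz; move: nz; rewrite e bz mul0r eqxx.
  have H1 : Ssim (b, a) (b, 0).
    right; split; first by move=> /= e'; apply: ne; rewrite e'.
    by split; [exact: bnz | rewrite /= addr0 hab].
  have := Hm _ _ _ _ H1 (Hr (x,0)).
  rewrite /Smul /Ssim /= !mulr0 !mul0r !addr0 !add0r.
  case => [e2|[h _]].
    have := congr1 snd e2 => /= e3. by move: nz; rewrite e3 eqxx.
  by apply: h; rewrite e.
Qed.
End Dir12.

Section Dir21.
Variable X : comPzSemiRingType.
Hypothesis I : forall x : X, x + x = x.
Hypothesis Lin : linearly_ordered_sr X.
Hypothesis C : forall a b x : X, ilt a b -> a * x = 0 \/ ilt (a * x) (b * x).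

Lemma sum_cases (a b : X) : a + b = a \/ a + b = b.
Proof.
case: (Lin a b) => [[w hw]|[w hw]].
- by right; rewrite -hw addrA I.
- by left; rewrite addrC -hw addrA I.
Qed.

Lemma sle_anti (a b : X) : a + b = b -> b + a = a -> a = b.
Proof. move=> h1 h2. by rewrite -h2 addrC h1. Qed.

Lemma sle_trans (a b c : X) : a + b = b -> b + c = c -> a + c = c.
Proof. move=> h1 h2. by rewrite -h2 addrA h1. Qed.

Lemma sum0 (a b : X) : a + b = 0 -> b = 0.
Proof.
move=> h. have : b + (a + b) = a + b by rewrite addrCA I.
by rewrite h addr0.
Qed.

Lemma C' (a b x : X) : a + b = b -> a <> b ->
  a * x = 0 \/ (a * x + b * x = b * x /\ a * x <> b * x).
Proof.
move=> h1 h2. have H : ilt a b by split=> //; exists b.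
case: (C a b x H) => [->|[[w hw] hne]]; [by left|right].
split => //. by rewrite -hw addrA I.
Qed.

Definition mag (p : SX X) : X := p.1 + p.2.
Definition canon (p : SX X) : SX X :=
  if p.1 == p.2 then p else if p.1 + p.2 == p.1 then (p.1, 0) else (0, p.2).

Lemma canon_cases (p : SX X) : (p.1 = p.2 /\ canon p = p) \/
  (p.1 + p.2 = p.1 /\ p.1 <> p.2 /\ canon p = (p.1, 0)) \/
  (p.1 + p.2 = p.2 /\ p.1 <> p.2 /\ canon p = (0, p.2)).
Proof.
rewrite /canon. case: eqP => [e|ne]; first by left.
case: eqP => [e|ne2]; first by right; left.
right; right; split => //. by case: (sum_cases p.1 p.2).
Qed.

Lemma canon_pos (a b : X) : a + b = a -> a <> b -> canon (a, b) = (a, 0).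
Proof.
move=> h ne. have /negbTE e : a != b by apply/eqP.
by rewrite /canon /= e h eqxx.
Qed.

Lemma canon_neg (a b : X) : a + b = b -> a <> b -> canon (a, b) = (0, b).
Proof.
move=> h ne. have /negbTE e : a != b by apply/eqP.
have /negbTE e' : b != a by apply/eqP => e2; apply: ne.
by rewrite /canon /= e h e'.
Qed.

Lemma canon_diag' (a : X) : canon (a, a) = (a, a).
Proof. by rewrite /canon /= eqxx. Qed.

Lemma mag_canon (p : SX X) : mag (canon p) = mag p.
Proof.
case: (canon_cases p) => [[_ ->]|[[h [_ ->]]|[h [_ ->]]]] //; rewrite /mag /=.
- by rewrite addr0 h.
- by rewrite add0r h.
Qed.

Lemma canon_diag (p : SX X) : (canon p).1 = (canon p).2 -> p.1 = p.2.
Proof.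
case: (canon_cases p) => [[e _]|[[h [ne ->]]|[h [ne ->]]]] //= e.
- by rewrite e in h; rewrite add0r in h; rewrite e h.
- by rewrite -e in h; rewrite addr0 in h; rewrite -e h.
Qed.

Lemma canon_canon (p : SX X) : canon (canon p) = canon p.
Proof.
case: (canon_cases p) => [[_ E]|[[h [ne E]]|[h [ne E]]]]; rewrite E //.
- apply: canon_pos; first by rewrite addr0.
  move=> z; apply: ne; rewrite z in h *; by rewrite add0r in h.
- apply: canon_neg; first by rewrite add0r.
  move=> z; apply: ne; rewrite -z in h *; by rewrite addr0 in h.
Qed.

Lemma pp_eq (a1 a2 b1 b2 : X) : a1 + a2 = a1 -> a1 <> a2 -> b1 + b2 = b1 -> b1 <> b2 ->
  a1 + b2 = a2 + b1 -> a1 = b1.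
Proof.
move=> ha na hb nb e. case: (sum_cases a1 b1) => h.
- have h2 : b2 + a1 = a1.
    by apply: (@sle_trans _ b1 _); rewrite addrC.
  rewrite addrC h2 in e.
  by case: (sum_cases a2 b1) => e2; rewrite e2 in e.
- have h2 : a2 + b1 = b1 by apply: (@sle_trans _ a1 _) => //; rewrite addrC.
  rewrite h2 in e.
  by case: (sum_cases a1 b2) => e2; rewrite e2 in e => //; exfalso; apply: nb.
Qed.

Lemma pn_false (a1 a2 b1 b2 : X) : a1 + a2 = a1 -> a1 <> a2 -> b1 + b2 = b2 -> b1 <> b2 ->
  a1 + b2 = a2 + b1 -> False.
Proof.
move=> ha na hb nb e. case: (sum_cases a2 b1) => h; rewrite h in e.
- apply: na; apply: sle_anti; last by rewrite addrC.
  by rewrite -e addrA I.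
- apply: nb; apply: sle_anti => //.
  by rewrite -e addrCA I.
Qed.

Lemma Ssim_canon (p q : SX X) : Ssim p q <-> canon p = canon q.
Proof.
split.
- case => [->//|[n1 [n2 e]]].
  case: (canon_cases p) => [[d _]|[[hp [np ->]]|[hp [np ->]]]]; first by [];
  case: (canon_cases q) => [[d _]|[[hq [nq ->]]|[hq [nq ->]]]] //.
  + by congr (_,_); apply: (pp_eq _ _ _ _ hp np hq nq e).
  + by exfalso; apply: (pn_false _ _ _ _ hp np hq nq e).
  + exfalso; apply: (pn_false _ _ _ _ hq nq hp np).
    by rewrite addrC -e addrC.
  + congr (_,_); apply: (pp_eq p.2 p.1 q.2 q.1); rewrite ?(addrC p.2) ?(addrC q.2) //.
    * by move=> e'; apply: np.
    * by move=> e'; apply: nq.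
    * by rewrite addrC -e addrC.
- move=> H.
  have Dp : forall r, r.1 = r.2 -> canon r = r.
    by move=> r e; rewrite /canon e eqxx.
  case: (eqVneq p.1 p.2) => [dp|dp].
    have dq : q.1 = q.2 by apply: canon_diag; rewrite -H Dp.
    by left; move: H; rewrite (Dp _ dp) (Dp _ dq).
  case: (eqVneq q.1 q.2) => [dq|dq].
    have : p.1 = p.2 by apply: canon_diag; rewrite H Dp.
    by move/eqP: dp.
  right; split; first exact/eqP. split; first exact/eqP.
  move/eqP: dp => dp; move/eqP: dq => dq.
  case: (canon_cases p) => [[d _]|[[hp [np E1]]|[hp [np E1]]]] //.
  all: case: (canon_cases q) => [[d _]|[[hq [nq E2]]|[hq [nq E2]]]] //.
  all: rewrite E1 E2 in H.
  all: have e1 := congr1 fst H.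
  all: have e2 := congr1 snd H.
  all: simpl in e1, e2.
  + by rewrite -e1 in hq; rewrite -e1 hq addrC hp.
  + by exfalso; apply: np; rewrite e1 in hp *; rewrite add0r in hp.
  + by exfalso; apply: nq; rewrite -e1 in hq *; rewrite add0r in hq.
  + by rewrite -e2 in hq; rewrite -e2 hp addrC hq.
Qed.

Definition small (u m : X) := u + m = m /\ (u = m -> u = 0).

Lemma small0 (m : X) : small 0 m.
Proof. by split; [exact: add0r | done]. Qed.

Lemma smallD (u u' m : X) : small u m -> small u' m -> small (u + u') m.
Proof.
move=> [h1 z1] [h2 z2]; split; first by rewrite -addrA h2 h1.
move=> e. case: (sum_cases u u') => e2; rewrite e2 in e *; [exact: z1 | exact: z2].
Qed.

Lemma smallW (u m m' : X) : small u m -> small u (m + m').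
Proof.
move=> [h z]; split; first by rewrite addrA h.
move=> e. apply: z. have h2 : m + u = u by rewrite e addrA I.
exact: sle_anti h h2.
Qed.

Lemma smallW' (u m m' : X) : small u m' -> small u (m + m').
Proof. by rewrite addrC; exact: smallW. Qed.

Lemma absorb (x : SX X) (u v : X) : small u (mag x) -> small v (mag x) ->
  canon (x.1 + u, x.2 + v) = canon x.
Proof.
case: x => a b. rewrite /mag /=. move=> [hu zu] [hv zv].
case: (canon_cases (a,b)) => /= [[e E]|[[h [ne E]]|[h [ne E]]]]; rewrite E.
- subst b. rewrite I in hu hv. by rewrite (addrC a u) (addrC a v) hu hv canon_diag'.
- rewrite h in hu hv zv. rewrite (addrC a u) hu. apply: canon_pos.
    by rewrite addrA h addrC hv.
  move=> e'. case: (sum_cases b v) => e2; rewrite e2 in e' => //.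
  have v0 := zv (esym e'). rewrite v0 in e'. apply: ne. rewrite e' in h *.
  by rewrite add0r in h.
- rewrite h in hu hv zu. rewrite (addrC b v) hv. apply: canon_neg.
    by rewrite -addrA hu h.
  move=> e'. case: (sum_cases a u) => e2; rewrite e2 in e' => //.
  have u0 := zu e'. rewrite u0 in e'. apply: ne. rewrite -e' in h *.
  by rewrite addr0 in h.
Qed.

Lemma absorbS (x : SX X) (u v : X) : small u (mag x) -> small v (mag x) ->
  canon (Sadd x (u, v)) = canon x.
Proof. exact: absorb. Qed.

Lemma decomp (p : SX X) : exists u v, p = Sadd (canon p) (u, v) /\ small u (mag p) /\ small v (mag p).
Proof.
case: (canon_cases p) => [[d E]|[[h [ne E]]|[h [ne E]]]]; rewrite E.
- exists 0, 0; split; last by split; apply: small0.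
  by rewrite /Sadd /= !addr0; destruct p.
- exists 0, p.2; split; first by rewrite /Sadd /= addr0 add0r; destruct p.
  split; first exact: small0.
  split; first by rewrite /mag addrCA I.
  by rewrite /mag h => e; exfalso; apply: ne.
- exists p.1, 0; split; first by rewrite /Sadd /= addr0 add0r; destruct p.
  split; last exact: small0.
  split; first by rewrite /mag addrA I.
  by rewrite /mag h => e; exfalso; apply: ne.
Qed.

Lemma mag_add (p q : SX X) : mag (Sadd p q) = mag p + mag q.
Proof. by rewrite /mag /Sadd /= addrACA. Qed.

Lemma canon_add (p q : SX X) : canon (Sadd p q) = canon (Sadd (canon p) (canon q)).
Proof.
have [u [v [Ep [su sv]]]] := decomp p.
have [u' [v' [Eq [su' sv']]]] := decomp q.
rewrite {1}Ep {1}Eq.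
have -> : Sadd (Sadd (canon p) (u, v)) (Sadd (canon q) (u', v')) =
  Sadd (Sadd (canon p) (canon q)) (u + u', v + v').
  by rewrite /Sadd /=; congr (_,_); apply: addrACA.
apply: absorbS; rewrite mag_add !mag_canon;
  apply: smallD; [apply: smallW | apply: smallW' | apply: smallW | apply: smallW'];
  done.
Qed.

Lemma KL (m n u v : X) : u + m = m -> u <> m -> v + n = n -> v <> n ->
  canon (m*n + u*v, m*v + u*n) = canon (m*n, 0) /\
  canon (m*v + u*n, m*n + u*v) = canon (0, m*n).
Proof.
move=> hu nu hv nv.
have uvle : u*v + m*n = m*n.
  apply: (@sle_trans _ (m*v) _); first by rewrite -mulrDl hu.
  by rewrite -mulrDr hv.
have -> : m*n + u*v = m*n by rewrite addrC uvle.
have sm : small (m*v + u*n) (m*n).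
  apply: smallD.
  - split; first by rewrite -mulrDr hv.
    move=> e. case: (C' v n m hv nv) => [h|[_ h]]; first by rewrite mulrC h.
    by exfalso; apply: h; rewrite mulrC e mulrC.
  - split; first by rewrite -mulrDl hu.
    move=> e. case: (C' u m n hu nu) => [h|[_ h]] //.
case: (eqVneq (m*n) 0) => [z|nz].
  have s0 : m*v + u*n = 0 by move: sm.1; rewrite z addr0.
  by rewrite s0 z.
have ns : m*v + u*n <> m*n.
  move=> e; move/eqP: nz; apply; rewrite -e; exact: sm.2.
split.
- rewrite canon_pos; first (rewrite canon_pos //; first by rewrite addr0).
  + by move/eqP: nz.
  + by rewrite addrC sm.1.
  + by move=> e; apply: ns.
- rewrite canon_neg // ?canon_neg //; first by rewrite add0r.
  + by move=> e; move/eqP: nz; apply.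
  + exact: sm.1.
Qed.

Lemma Smul_comm (p q : SX X) : Smul p q = Smul q p.
Proof. by rewrite /Smul; congr (_,_); rewrite ?(mulrC p.1) ?(mulrC p.2) // addrC. Qed.

Lemma canon_mul (p q : SX X) : canon (Smul p q) = canon (Smul (canon p) (canon q)).
Proof.
have Hd : forall d r, canon (Smul (d,d) r) = (d * mag r, d * mag r).
  move=> d [r1 r2]; rewrite /Smul /mag /=.
  have -> : d*r2 + d*r1 = d*r1 + d*r2 by rewrite addrC.
  by rewrite canon_diag' -mulrDr.
case: (canon_cases p) => [[dp Ep]|[[hp [np Ep]]|[hp [np Ep]]]].
  destruct p as [p1 p2]; simpl in dp; subst p2.
  by rewrite Ep !Hd mag_canon.
all: case: (canon_cases q) => [[dq Eq]|[[hq [nq Eq]]|[hq [nq Eq]]]];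
  first by (destruct q as [q1 q2]; simpl in dq; subst q2;
            rewrite Eq Smul_comm [Smul _ (q1,q1)]Smul_comm !Hd mag_canon).
all: rewrite Ep Eq; destruct p as [p1 p2]; destruct q as [q1 q2]; simpl in *;
  rewrite /Smul /= !mulr0 !mul0r ?addr0 ?add0r.
- have nu : p2 <> p1 by move=> e; apply: np.
  have nv : q2 <> q1 by move=> e; apply: nq.
  have hu : p2 + p1 = p1 by rewrite addrC.
  have hv : q2 + q1 = q1 by rewrite addrC.
  exact: (KL _ _ _ _ hu nu hv nv).1.
- have nu : p2 <> p1 by move=> e; apply: np.
  have hu : p2 + p1 = p1 by rewrite addrC.
  exact: (KL _ _ _ _ hu nu hq nq).2.
- have nv : q2 <> q1 by move=> e; apply: nq.
  have hv : q2 + q1 = q1 by rewrite addrC.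
  rewrite (addrC (p1*q1)) (addrC (p1*q2)).
  exact: (KL _ _ _ _ hp np hv nv).2.
- rewrite (addrC (p1*q1)) (addrC (p1*q2)).
  exact: (KL _ _ _ _ hp np hq nq).1.
Qed.

Lemma shape (p : SX X) : canon p = (mag p, mag p) \/ canon p = (mag p, 0) \/ canon p = (0, mag p).
Proof.
case: (canon_cases p) => [[d E]|[[h [ne E]]|[h [ne E]]]]; rewrite E /mag.
- by left; destruct p; simpl in *; subst; rewrite I.
- by right; left; rewrite h.
- by right; right; rewrite h.
Qed.

Lemma ub_step (a x b : SX X) : canon (Sadd a x) = canon b -> mag a = mag b ->
  canon b = canon a \/ canon b = (mag b, mag b).
Proof.
move=> H hm.
have e : mag b = mag a + mag x by rewrite -mag_canon -H mag_canon mag_add.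
have hmx : mag a + mag x = mag a by rewrite -e hm.
rewrite canon_add in H.
have sa := shape a; have sx := shape x.
case: (eqVneq (mag x) (mag a)) => [ex|nx].
  rewrite ex in sx. rewrite -hm.
  case: sa => [Ea|[Ea|Ea]]; case: sx => [Ex|[Ex|Ex]]; rewrite Ea Ex /Sadd /= ?I ?addr0 ?add0r in H;
  first [ by right; rewrite -H canon_diag' | by left; rewrite -H -Ea canon_canon ].
left; rewrite -H.
have sn : small (mag x) (mag (canon a)).
  rewrite mag_canon; split; first by rewrite addrC.
  by move=> e'; move/eqP: nx.
case: sx => [Ex|[Ex|Ex]]; rewrite Ex absorbS ?canon_canon //; exact: small0.
Qed.

Lemma ub : quot_upper_bound X.
Proof.
move=> a b [x Hx] [y Hy]. apply/Ssim_canon.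
move/Ssim_canon: Hx => Hx; move/Ssim_canon: Hy => Hy.
have ma : mag b = mag a + mag x by rewrite -mag_canon -Hx mag_canon mag_add.
have mb : mag a = mag b + mag y by rewrite -mag_canon -Hy mag_canon mag_add.
have hm : mag a = mag b.
  apply: sle_anti; first by rewrite ma addrA I.
  by rewrite mb addrA I.
case: (ub_step _ _ _ Hx hm) => h1; first by [];
case: (ub_step _ _ _ Hy (esym hm)) => h2 //.
by rewrite h1 h2 hm.
Qed.

Lemma sim_congr : is_congruence (@Ssim X).
Proof.
split.
- by left.
- by move=> a b /Ssim_canon h; apply/Ssim_canon.
- by move=> a b c /Ssim_canon h1 /Ssim_canon h2; apply/Ssim_canon; rewrite h1.
- move=> a a' b b' /Ssim_canon h1 /Ssim_canon h2; apply/Ssim_canon.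
  by rewrite canon_add h1 h2 -canon_add.
- move=> a a' b b' /Ssim_canon h1 /Ssim_canon h2; apply/Ssim_canon.
  by rewrite canon_mul h1 h2 -canon_mul.
Qed.

Lemma dir21 : is_congruence (@Ssim X) /\ quot_upper_bound X.
Proof. split; [exact: sim_congr | exact: ub]. Qed.
End Dir21.

Theorem lemma6p3 (X : comPzSemiRingType) :
  (is_congruence (@Ssim X) /\ quot_upper_bound X) <->
  [/\ idempotent_sr X, linearly_ordered_sr X &
      forall a b x : X, ilt a b -> a * x = 0 \/ ilt (a * x) (b * x)].
Proof.
split.
- by move=> [Hc _]; exact: dir12.
- by move=> [Id Lin C]; exact: (@dir21 X Id Lin C).
Qed.
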